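(* A bipartite graph $G$ contains a repairable maximum stable set if and only if $G$ contains a perfect matching $M$ such that every edge of $M$ has an endpoint of degree one in $G$.
   Context: A maximum stable set is a stable set of maximum cardinality. A stable set $S$ of $G=(V,E)$ is repairable if for every $v\in S$ there exists $u\in V\setminus S$ such that $(S\setminus\{v\})\cup\{u\}$ is a stable set. *)

(* Defs.v *)
From mathcomp Require Import all_boot.
Set Implicit Arguments. Unset Strict Implicit. Unset Printing Implicit Defensive.

Definition simple_graph (T : finType) (e : rel T) : Prop :=
  symmetric e /\ irreflexive e.

Definition bipartite (T : finType) (e : rel T) : Prop :=
  exists A : {set T}, forall x y, e x y -> (x \in A) != (y \in A).

Definition stable (T : finType) (e : rel T) (S : {set T}) : Prop :=
  forall x y, x \in S -> y \in S -> ~~ e x y.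

Definition maximum_stable (T : finType) (e : rel T) (S : {set T}) : Prop :=
  stable e S /\ forall S' : {set T}, stable e S' -> #|S'| <= #|S|.

Definition repairable (T : finType) (e : rel T) (S : {set T}) : Prop :=
  stable e S /\
  forall v, v \in S -> exists2 u, u \notin S & stable e (u |: (S :\ v)).

Definition degree (T : finType) (e : rel T) (x : T) : nat := #|[set y | e x y]|.

Definition is_edge (T : finType) (e : rel T) (m : {set T}) : Prop :=
  exists x y, e x y /\ m = [set x; y].

Definition perfect_matching (T : finType) (e : rel T) (M : {set {set T}}) : Prop :=
  (forall m, m \in M -> is_edge e m) /\
  (forall x : T, #|[set m in M | x \in m]| = 1).

(* Main.v *)
Require Import Defs.
From mathcomp Require Import all_boot.

Lemma fwd (T : finType) (e : rel T) : simple_graph e -> bipartite e ->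
  forall S, maximum_stable e S -> repairable e S ->
  (exists M : {set {set T}}, perfect_matching e M /\
     forall m, m \in M -> exists2 x, x \in m & degree e x = 1).
Proof.
move=> [esym eirr] bp S [stS maxS] [_ rep].
have key : forall v, exists u, v \in S ->
    [/\ u \notin S, e v u & forall w, w \in S -> e u w -> w = v].
  move=> v; case vS: (v \in S); last by exists v.
  have [u uS stu] := rep v vS; exists u => _.
  have Hw : forall w, w \in S -> e u w -> w = v.
    move=> w wS euw; apply/eqP; apply/negPn/negP => wv.
    have := stu u w; rewrite !inE eqxx wv wS orbT /= => /(_ isT isT).
    by rewrite euw.
  split => //; case evu: (e v u) => //; exfalso.
  have: stable e (u |: S).
    move=> x y; rewrite !inE => /orP[/eqP->|xS] /orP[/eqP->|yS].
    - by rewrite eirr.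
    - apply/negP => euy; have yv := Hw y yS euy; subst y.
      by rewrite esym evu in euy.
    - apply/negP => exu; rewrite esym in exu; have xv := Hw x xS exu; subst x.
      by rewrite esym evu in exu.
    - exact: stS.
  by move/maxS; rewrite cardsU1 uS add1n ltnn.
have [f Hf] := fin_all_exists key.
have finj : {in S &, injective f}.
  move=> v w vS wS fvw; have [_ evf _] := Hf v vS; have [_ _ Hw] := Hf w wS.
  by apply: Hw vS _; rewrite -fvw esym.
have half : #|T| <= #|S| + #|S|.
  case: bp => A HA.
  have stA : stable e A.
    by move=> x y xA yA; apply/negP => /HA; rewrite xA yA.
  have stAc : stable e (~: A).
    by move=> x y; rewrite !inE => xA yA; apply/negP => /HA; rewrite (negbTE xA) (negbTE yA).
  by rewrite -(cardsC A); apply: leq_add; apply: maxS.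
have imS : f @: S = ~: S.
  apply/eqP; rewrite eqEcard; apply/andP; split.
    apply/subsetP => y /imsetP[v vS ->]; rewrite inE; by case: (Hf v vS).
  rewrite card_in_imset //.
  by rewrite -(cardsC S) leq_add2l in half.
have pre : forall y, y \notin S -> exists2 w, w \in S & y = f w.
  move=> y yS; have: y \in f @: S by rewrite imS inE.
  by case/imsetP=> w ? ->; exists w.
have deg : forall v, v \in S -> degree e v = 1.
  move=> v vS; rewrite /degree; apply/eqP/cards1P; exists (f v); apply/setP => y.
  rewrite !inE; apply/idP/eqP => [evy|->]; last by case: (Hf v vS).
  have yS : y \notin S by apply/negP => yS; have := stS v y vS yS; rewrite evy.
  have [w wS yw] := pre y yS; subst y; have [_ _ Hw] := Hf w wS.
  have evw : e (f w) v by rewrite esym.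
  by rewrite (Hw v vS evw).
exists [set [set v; f v] | v in S]; split; [split|].
- move=> m /imsetP[v vS ->]; exists v, (f v); split => //; by case: (Hf v vS).
- move=> x.
  have [w wS xw] : exists2 w, w \in S & x \in [set w; f w].
    case xS: (x \in S); first by exists x => //; rewrite !inE eqxx.
    have [w wS ->] := pre x (negbT xS); exists w => //; by rewrite !inE eqxx orbT.
  apply/eqP/cards1P; exists [set w; f w]; apply/setP => m; rewrite !inE.
  apply/andP/eqP => [[/imsetP[w' w'S ->] xw']|->]; last first.
    by split => //; apply/imsetP; exists w.
  suff -> : w' = w by [].
  move: xw xw'; rewrite !inE => /orP[] /eqP -> /orP[] /eqP.
  + by move=> ->.
  + move=> E; have [H _ _] := Hf w' w'S; by rewrite -E wS in H.
  + move=> E; have [H _ _] := Hf w wS; by rewrite E w'S in H.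
  + by move=> E; apply: finj.
- move=> m /imsetP[v vS ->]; exists v; [by rewrite !inE eqxx | exact: deg].
Qed.

Lemma bwd (T : finType) (e : rel T) : simple_graph e ->
  forall M : {set {set T}}, perfect_matching e M ->
     (forall m, m \in M -> exists2 x, x \in m & degree e x = 1) ->
  exists S : {set T}, maximum_stable e S /\ repairable e S.
Proof.
move=> [esym eirr] M [edg cov] lf.
have uniqm : forall x m m', m \in M -> m' \in M -> x \in m -> x \in m' -> m = m'.
  move=> x m m' mM m'M xm xm'.
  have /cards1P[c Hc] : #|[set m in M | x \in m]| == 1 by rewrite cov.
  have: m \in [set c] by rewrite -Hc inE mM xm.
  have: m' \in [set c] by rewrite -Hc inE m'M xm'.
  by rewrite !inE => /eqP-> /eqP->.
have exm : forall x, exists2 m, m \in M & x \in m.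
  move=> x; have /cards1P[c Hc] : #|[set m in M | x \in m]| == 1 by rewrite cov.
  have: c \in [set m in M | x \in m] by rewrite Hc set11.
  by rewrite inE => /andP[]; exists c.
have partner : forall m x, m \in M -> x \in m ->
    exists p, [/\ p \in m, e x p & m = [set x; p]].
  move=> m x mM xm; have [a [b [eab Em]]] := edg m mM; subst m.
  move: xm; rewrite !inE => /orP[]/eqP->.
    by exists b; rewrite !inE eqxx orbT.
  exists a; split; [by rewrite !inE eqxx | by rewrite esym | by rewrite setUC].
have leafnb : forall x y z, degree e x = 1 -> e x y -> e x z -> y = z.
  move=> x y z; rewrite /degree => /eqP/cards1P[c Hc] exy exz.
  have: y \in [set c] by rewrite -Hc inE.
  have: z \in [set c] by rewrite -Hc inE.
  by rewrite !inE => /eqP-> /eqP->.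
pose leaf (m : {set T}) := [pick x in m | degree e x == 1].
have leafP : forall m, m \in M -> exists2 x, leaf m = Some x & x \in m /\ degree e x = 1.
  move=> m mM; rewrite /leaf; case: pickP => [x /andP[xm /eqP dx]|none].
    by exists x.
  have [x xm dx] := lf m mM; by move: (none x); rewrite xm dx eqxx.
pose S := [set x | [exists m in M, leaf m == Some x]].
have inS : forall x, x \in S ->
    exists2 m, m \in M & [/\ leaf m = Some x, x \in m & degree e x = 1].
  move=> x; rewrite inE => /existsP[m /andP[mM /eqP lm]]; exists m => //.
  have [y ly [ym dy]] := leafP m mM; rewrite lm in ly.
  by case: ly => Exy; subst y; split.
have stS : stable e S.
  move=> x y xS yS; apply/negP => exy.
  have [m mM [lm xm dx]] := inS x xS; have [m' m'M [lm' ym' dy]] := inS y yS.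
  have [p [pm exp Em]] := partner m x mM xm.
  have yp := leafnb x y p dx exy exp; subst p.
  have mm := uniqm y m m' mM m'M pm ym'; subst m'.
  rewrite lm in lm'; case: lm' => xy; subst y; by rewrite eirr in exy.
pose h x := odflt set0 [pick m in M | x \in m].
have hP : forall x, h x \in M /\ x \in h x.
  move=> x; rewrite /h; case: pickP => [m /andP[? ?]|none] //=.
  have [m mM xm] := exm x; by move: (none m); rewrite mM xm.
have bound : forall S', stable e S' -> #|S'| <= #|M|.
  move=> S' st.
  have inj : {in S' &, injective h}.
    move=> x y xS yS hxy; have [hxM xh] := hP x; have [hyM yh] := hP y.
    rewrite -hxy in yh; have [p [pm exp Em]] := partner _ _ hxM xh.
    move: yh; rewrite Em !inE => /orP[/eqP->//|/eqP yp]; subst p.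
    by have := st x y xS yS; rewrite exp.
  rewrite -(card_in_imset inj); apply: subset_leq_card; apply/subsetP.
  by move=> _ /imsetP[x _ ->]; case: (hP x).
have lower : #|M| <= #|S|.
  apply: (leq_trans _ (leq_imset_card h S)); apply: subset_leq_card.
  apply/subsetP => m mM; have [x lx [xm dx]] := leafP m mM.
  apply/imsetP; exists x.
    by rewrite inE; apply/existsP; exists m; rewrite mM lx eqxx.
  have [hM xh] := hP x; exact: uniqm x m (h x) mM hM xm xh.
exists S; split; first by split=> // S' /bound/leq_trans; apply.
split => // v vS; have [m mM [lm vm dv]] := inS v vS.
have [p [pm evp Em]] := partner m v mM vm.
have Hp : forall y, y \in S -> y != v -> ~~ e p y.
  move=> y yS yv; apply/negP => epy.
  have [m' m'M [lm' ym' dy]] := inS y yS.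
  have [q [qm eyq Em']] := partner m' y m'M ym'.
  have eyp : e y p by rewrite esym.
  have pq := leafnb y p q dy eyp eyq; subst q.
  have mm := uniqm p m m' mM m'M pm qm.
  have E : v = y by move: lm'; rewrite -mm lm => -[].
  by rewrite E eqxx in yv.
exists p.
  apply/negP => pS; by have := stS v p vS pS; rewrite evp.
move=> x y; rewrite !in_setU1 !in_setD1 => /orP[/eqP->|/andP[xv xS]] /orP[/eqP->|/andP[yv yS]].
- by rewrite eirr.
- exact: Hp.
- by rewrite esym; apply: Hp.
- exact: stS.
Qed.

Theorem lemma3 (T : finType) (e : rel T) :
  simple_graph e -> bipartite e ->
  (exists S : {set T}, maximum_stable e S /\ repairable e S) <->
  (exists M : {set {set T}}, perfect_matching e M /\
     forall m, m \in M -> exists2 x, x \in m & degree e x = 1).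
Proof.
move=> sg bp; split.
  by case=> S [mS rS]; exact: (@fwd T e sg bp S mS rS).
by case=> M [pm lf]; exact: (@bwd T e sg M pm lf).
Qed.
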